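(* Under the standing assumptions below, the Bellman operator $\mathcal B$ maps $\mathcal N$ into itself: $\mathcal B(\mathcal N)\subset\mathcal N$.
   Context: Setup. Let $\mathcal S$ be a finite set and $(s_t)_{t\ge0}$ a Markov chain on $\mathcal S$ with transition probabilities $\pi(s'|s)>0$ for all $s,s'\in\mathcal S$; $\mathbb E_{s_t}$ denotes expectation over future shocks conditional on the history $s^t=(s_0,\dots,s_t)$. Let $\mathcal A\subset\mathbb R^n$ be a finite set, $\mathcal X\subseteq\mathbb R^m$ a countable set, $\zeta:\mathcal X\times\mathcal A\times\mathcal S\to\mathcal X$, $p:\mathcal X\times\mathcal A\times\mathcal S\to\mathbb R$, $r,g^1,\dots,g^I:\mathcal X\times\mathcal A\times\mathcal S\to\mathbb R$ bounded functions, $\bar g^1,\dots,\bar g^I\in\mathbb R$ and $\beta\in(0,1)$. A plan is a family $a=(a(s^t))_{t\ge0,\,s^t\in\mathcal S^{t+1}}$ with $a(s^t)\in\mathcal A$; given $x_0$ it induces states $x(s^0)=x_0$, $x(s^{t+1})=\zeta(x(s^t),a(s^t),s_t)$. Let $\tilde{\mathcal A}(x,s)=\{a\in\mathcal A:p(x,a,s)\ge0\}$ and $\tilde{\mathcal A}^\infty(x_0)$ the set of plans with $a(s^t)\in\tilde{\mathcal A}(x(s^t),s_t)$ for all $t,s^t$. A plan is feasible for $(x_0,s_0)$ if it lies in $\tilde{\mathcal A}^\infty(x_0)$ and $\mathbb E_{s_t}\sum_{n\ge0}\beta^ng^i(x(s^{t+n}),a(s^{t+n}),s_{t+n})\ge\bar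 g^i$ for all $t,s^t,i$. Standing assumption: for every $(x_0,s_0)$ a feasible plan exists. Function spaces. Let $L=(\|r\|_\infty+\sum_{i=1}^I\|g^i\|_\infty)/(1-\beta)$, $B(k)=\{\gamma\in\mathbb R^I_+:\|\gamma\|_\infty\le k\}$, and enumerate $\mathcal S=\{s_1,\dots,s_{|\mathcal S|}\}$, $\mathcal X=\{x_1,x_2,\dots\}$. $\mathcal M$ is the set of $F:\mathbb R^I_+\times\mathcal X\times\mathcal S\to\mathbb R$ with $F(\cdot,x,s)\in L^\infty(B(k))$ for all $k\in\mathbb N_+$, $x,s$, and $\|F\|_{\mathcal M}:=\sum_{i}2^{-i}\sum_j2^{-j}\sum_{k\ge1}2^{-k}\|F(\cdot,x_j,s_i)\|_{L^\infty(B(k))}<\infty$. $\mathcal N\subset\mathcal M$ is the set of $F\in\mathcal M$ such that for all $x,s$: (i) $F(\cdot,x,s)$ is convex; (ii) $|F(\gamma_1,x,s)-F(\gamma_2,x,s)|\le L\|\gamma_1-\gamma_2\|_1$; (iii) $F(\gamma,x,s)\ge v^0+\sum_i\gamma^iv^i$ for every feasible plan for $(x,s)$, where $v^0=\mathbb E_{s}\sum_t\beta^tr(x(s^t),a(s^t),s_t)$, $v^i=\mathbb E_s\sum_t\beta^tg^i(x(s^t),a(s^t),s_t)$ (with $x_0=x,s_0=s$); (iv) $F(\gamma,x,s)\le(1+\sum_i\gamma^i)L$. Bellman operator: for $F:\mathbb R^I_+\times\mathcal X\times\mathcal S\to\mathbb R$, $\mathcal B(F)(\gamma,x,s)=\inf_{\lambda\in\mathbb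 R^I_+}\sup_{a\in\tilde{\mathcal A}(x,s)}\big[r(x,a,s)+\sum_i(\gamma^ig^i(x,a,s)+\lambda^i(g^i(x,a,s)-\bar g^i))+\beta\mathbb E_sF(\gamma+\lambda,\zeta(x,a,s),s')\big]$, where $\mathbb E_s$ is expectation over $s'\sim\pi(\cdot|s)$. *)

(* Defs.v *)
From HB Require Import structures.
From mathcomp Require Import all_boot all_order all_algebra.
From mathcomp Require Import all_classical all_reals all_analysis.
Import Order.TTheory GRing.Theory Num.Theory.
Set Implicit Arguments. Unset Strict Implicit. Unset Printing Implicit Defensive.
Local Open Scope ring_scope.
Local Open Scope classical_set_scope.

(* Conventions.
   - S : finType (shocks), A : finType (actions), X : countType (endogenous
     states), I : nat (number of constraints), constraint indices 'I_I.
   - gamma, lambda in R^I are functions 'I_I -> R; R^I_+ is [nonneg].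
   - A history s^t = (s_0, ..., s_t) for a FIXED initial shock s0 is
     represented by the list h = [:: s_t; ...; s_1] of later shocks
     (newest first); the current shock is [head s0 h].
   - A plan for initial shock s0 is a map [seq S -> A] on such histories. *)

Definition nonneg (R : realType) (I : nat) (gam : 'I_I -> R) : Prop :=
  forall i, 0 <= gam i.

Definition ballB (R : realType) (I : nat) (k : nat) : set ('I_I -> R) :=
  [set gam | nonneg gam /\ forall i, gam i <= k%:R].

Fixpoint state (S A X : Type) (zeta : X -> A -> S -> X)
    (x0 : X) (s0 : S) (a : seq S -> A) (h : seq S) : X :=
  match h with
  | [::] => x0
  | _ :: h' => zeta (state zeta x0 s0 a h') (a h') (head s0 h')
  end.

(* cexp pi s0 n f h = E_{s_t}[ f(s^{t+n}) ], conditional expectation n steps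
   ahead given the history h = s^t *)
Fixpoint cexp (R : realType) (S : finType) (pi : S -> S -> R) (s0 : S)
    (n : nat) (f : seq S -> R) (h : seq S) : R :=
  match n with
  | 0 => f h
  | n'.+1 => \sum_(s' : S) pi (head s0 h) s' * cexp pi s0 n' f (s' :: h)
  end.

Definition disc_value (R : realType) (S A : finType) (X : Type)
    (pi : S -> S -> R) (zeta : X -> A -> S -> X) (beta : R)
    (x0 : X) (s0 : S) (a : seq S -> A) (u : X -> A -> S -> R) (h : seq S) : R :=
  limn (fun N => \sum_(0 <= n < N)
     (beta ^+ n * cexp pi s0 n
        (fun h' => u (state zeta x0 s0 a h') (a h') (head s0 h')) h)).

Definition feasible (R : realType) (S A : finType) (X : Type) (I : nat)
    (pi : S -> S -> R) (zeta : X -> A -> S -> X) (p : X -> A -> S -> R)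
    (g : 'I_I -> X -> A -> S -> R) (gbar : 'I_I -> R) (beta : R)
    (x0 : X) (s0 : S) (a : seq S -> A) : Prop :=
  (forall h, 0 <= p (state zeta x0 s0 a h) (a h) (head s0 h)) /\
  (forall h i, gbar i <= disc_value pi zeta beta x0 s0 a (g i) h).

Definition supnorm (R : realType) (S A X : Type) (f : X -> A -> S -> R) : R :=
  sup [set `|f t.1.1 t.1.2 t.2| | t in [set: X * A * S]].

Definition Lconst (R : realType) (S A X : Type) (I : nat)
    (r : X -> A -> S -> R) (g : 'I_I -> X -> A -> S -> R) (beta : R) : R :=
  (supnorm r + \sum_(i < I) supnorm (g i)) / (1 - beta).

(* ||F||_M, as an extended real; x_j is indexed by j = pickle x + 1 and
   s_i by i = enum_rank s + 1.  The L^oo(B(k)) norm is taken as the sup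
   over B(k). *)
Definition normM (R : realType) (S : finType) (X : countType) (I : nat)
    (F : ('I_I -> R) -> X -> S -> R) : \bar R :=
  (\sum_(s : S) ((2%:R^-1) ^+ (enum_rank s).+1)%:E *
     \esum_(x in [set: X]) (((2%:R^-1) ^+ (pickle x).+1)%:E *
        \sum_(1 <= k <oo) (((2%:R^-1) ^+ k)%:E *
            ereal_sup [set (`|F gam x s|)%:E | gam in @ballB R I k])))%E.

Definition inM (R : realType) (S : finType) (X : countType) (I : nat)
    (F : ('I_I -> R) -> X -> S -> R) : Prop :=
  (normM F < +oo)%E.

Definition inN (R : realType) (S A : finType) (X : countType) (I : nat)
    (pi : S -> S -> R) (zeta : X -> A -> S -> X) (p r : X -> A -> S -> R)
    (g : 'I_I -> X -> A -> S -> R) (gbar : 'I_I -> R) (beta : R)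
    (F : ('I_I -> R) -> X -> S -> R) : Prop :=
  inM F /\
  forall (x : X) (s : S),
  [/\
      (forall (g1 g2 : 'I_I -> R) (t : R), nonneg g1 -> nonneg g2 ->
          0 <= t -> t <= 1 ->
          F (fun i => t * g1 i + (1 - t) * g2 i) x s
            <= t * F g1 x s + (1 - t) * F g2 x s),
      (forall (g1 g2 : 'I_I -> R), nonneg g1 -> nonneg g2 ->
          `|F g1 x s - F g2 x s|
            <= Lconst r g beta * \sum_(i < I) `|g1 i - g2 i|),
      (* (iii) lower bound by values of feasible plans *)
      (forall (a : seq S -> A) (gam : 'I_I -> R),
          feasible pi zeta p g gbar beta x s a -> nonneg gam ->
          disc_value pi zeta beta x s a r [::]
            + \sum_(i < I) gam i * disc_value pi zeta beta x s a (g i) [::]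
            <= F gam x s) &
      (* (iv) upper bound *)
      (forall gam : 'I_I -> R, nonneg gam ->
          F gam x s <= (1 + \sum_(i < I) gam i) * Lconst r g beta)].

Definition Bop (R : realType) (S A : finType) (X : Type) (I : nat)
    (pi : S -> S -> R) (zeta : X -> A -> S -> X) (p r : X -> A -> S -> R)
    (g : 'I_I -> X -> A -> S -> R) (gbar : 'I_I -> R) (beta : R)
    (F : ('I_I -> R) -> X -> S -> R) (gam : 'I_I -> R) (x : X) (s : S)
    : \bar R :=
  ereal_inf
    [set ereal_sup
       [set (r x a s
             + \sum_(i < I) (gam i * g i x a s + lam i * (g i x a s - gbar i))
             + beta * \sum_(s' : S)
                 pi s s' * F (fun i => gam i + lam i) (zeta x a s) s')%:E
        | a in [set a : A | 0 <= p x a s]]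
     | lam in [set lam : 'I_I -> R | nonneg lam]].

(* Main.v *)
Require Import Defs.
From HB Require Import structures.
From mathcomp Require Import all_boot all_order all_algebra.
From mathcomp Require Import all_classical all_reals all_analysis.
From mathcomp Require Import ring lra.
Import Order.TTheory GRing.Theory Num.Theory.
Import numFieldNormedType.Exports.
Set Implicit Arguments. Unset Strict Implicit. Unset Printing Implicit Defensive.
Local Open Scope ring_scope.
Local Open Scope classical_set_scope.
Section Markov.
Variables (R : realType) (S A : finType) (X : Type) (pi : S -> S -> R)
  (zeta : X -> A -> S -> X) (beta : R).

Lemma head_cat (s0 s' : S) h : head s0 (h ++ [:: s']) = head s' h.
Proof. by case: h. Qed.

Lemma state_cat x0 s0 a s' h :
  state zeta x0 s0 a (h ++ [:: s']) =
  state zeta (zeta x0 (a [::]) s0) s' (fun h => a (h ++ [:: s'])) h.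
Proof. by elim: h => [|c h IH] //=; rewrite IH head_cat. Qed.

Lemma cexp_cat s0 s' n (f : seq S -> R) h :
  cexp pi s0 n f (h ++ [:: s']) = cexp pi s' n (fun h' => f (h' ++ [:: s'])) h.
Proof.
elim: n h => [|n IH] h //=; rewrite head_cat; apply: eq_bigr => c _.
by rewrite -IH.
Qed.

Lemma cexp_ext s0 n (f f' : seq S -> R) h :
  (forall h, f h = f' h) -> cexp pi s0 n f h = cexp pi s0 n f' h.
Proof. by move=> e; elim: n h => [|n IH] h //=; apply: eq_bigr => c _; rewrite IH. Qed.

Definition contp (a : seq S -> A) (s' : S) : seq S -> A := fun h => a (h ++ [:: s']).

Lemma disc_value_cat x0 s0 a s' (u : X -> A -> S -> R) h :
  disc_value pi zeta beta (zeta x0 (a [::]) s0) s' (contp a s') u h =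
  disc_value pi zeta beta x0 s0 a u (h ++ [:: s']).
Proof.
rewrite /disc_value; do 2 f_equal; apply/funext => N; apply: eq_bigr => n _.
rewrite cexp_cat; congr (_ * _); apply: cexp_ext => h'.
by rewrite /contp state_cat head_cat.
Qed.

Hypothesis pi_ge0 : forall s s', 0 <= pi s s'.
Hypothesis pi_sum1 : forall s, \sum_(s' : S) pi s s' = 1.

Lemma cexp_bound s0 n (f : seq S -> R) M h :
  (forall h, `|f h| <= M) -> `|cexp pi s0 n f h| <= M.
Proof.
move=> fM; elim: n h => [|n IH] h //=.
apply: le_trans (ler_norm_sum _ _ _) _.
rewrite -[leRHS]mul1r -(pi_sum1 (head s0 h)) mulr_suml; apply: ler_sum => c _.
by rewrite normrM ger0_norm // ler_wpM2l.
Qed.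

Lemma feasible_cont (p : X -> A -> S -> R) (I : nat) (g : 'I_I -> X -> A -> S -> R)
  gbar x0 s0 a s' :
  feasible pi zeta p g gbar beta x0 s0 a ->
  feasible pi zeta p g gbar beta (zeta x0 (a [::]) s0) s' (contp a s').
Proof.
move=> [hp hg]; split.
  by move=> h; have := hp (h ++ [:: s']); rewrite state_cat head_cat.
by move=> h i; rewrite disc_value_cat.
Qed.

End Markov.
Lemma cvg_seqsum (R : realType) (T : Type) (r : seq T) (w : T -> nat -> R) (D : T -> R) :
  (forall s, w s @ \oo --> D s) ->
  (fun n => \sum_(s <- r) w s n) @ \oo --> \sum_(s <- r) D s.
Proof.
move=> hw; elim: r => [|c r IH].
  rewrite big_nil; under eq_cvg do rewrite big_nil; exact: cvg_cst.
rewrite big_cons; under eq_cvg do rewrite big_cons.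
exact: cvgD.
Qed.

Section Markov2.
Variables (R : realType) (S A : finType) (X : Type) (pi : S -> S -> R)
  (zeta : X -> A -> S -> X) (beta : R).
Hypothesis pi_ge0 : forall s s', 0 <= pi s s'.
Hypothesis pi_sum1 : forall s, \sum_(s' : S) pi s s' = 1.
Hypothesis beta_ge0 : 0 <= beta.
Hypothesis beta_lt1 : beta < 1.

Definition dterm x0 s0 (a : seq S -> A) (u : X -> A -> S -> R) h n :=
  beta ^+ n * cexp pi s0 n
        (fun h' => u (state zeta x0 s0 a h') (a h') (head s0 h')) h.

Lemma dterm_bound x0 s0 a u h (M : R) : (forall x a s, `|u x a s| <= M) ->
  forall n, `|dterm x0 s0 a u h n| <= M * beta ^+ n.
Proof.
move=> uM n; rewrite /dterm normrM ger0_norm ?exprn_ge0 // mulrC.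
by rewrite ler_wpM2r ?exprn_ge0 // cexp_bound.
Qed.

Lemma dvE x0 s0 a u h :
  disc_value pi zeta beta x0 s0 a u h = limn (series (dterm x0 s0 a u h)).
Proof. by []. Qed.

Lemma dterm_cvg x0 s0 a u h (M : R) : 0 <= M -> (forall x a s, `|u x a s| <= M) ->
  cvgn (series (dterm x0 s0 a u h)).
Proof.
move=> M0 uM; apply: normed_cvg.
apply: (@series_le_cvg _ _ (geometric M beta)).
- by move=> n /=.
- by move=> n; apply: geometric_ge0.
- by move=> n /=; apply: dterm_bound.
- by apply: is_cvg_geometric_series; rewrite ger0_norm.
Qed.

Lemma geo_le (M : R) N : 0 <= M -> \sum_(0 <= n < N) M * beta ^+ n <= M / (1 - beta).
Proof.
move=> M0; have b1 : beta != 1 by rewrite lt_eqF.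
have := geometric_seriesE M b1.
move=> /(congr1 (fun f => f N)) /= => e.
rewrite (_ : \sum_(0 <= n < N) M * beta ^+ n = series (geometric M beta) N) //.
rewrite e /=; apply: ler_wpM2r; first by rewrite invr_ge0 subr_ge0 ltW.
by rewrite ler_piMr // gerBl exprn_ge0.
Qed.

Lemma dv_bound x0 s0 a u h (M : R) : 0 <= M -> (forall x a s, `|u x a s| <= M) ->
  `|disc_value pi zeta beta x0 s0 a u h| <= M / (1 - beta).
Proof.
move=> M0 uM; rewrite dvE ler_norml; apply/andP; split.
- apply: limr_ge; first exact: dterm_cvg uM.
  apply: nearW => N /=; rewrite lerNl.
  apply: le_trans (geo_le N M0); rewrite -sumrN; apply: ler_sum => n _.
  by rewrite lerNl; have := dterm_bound x0 s0 a h uM n; rewrite ler_norml => /andP[].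
- apply: limr_le; first exact: dterm_cvg uM.
  apply: nearW => N /=; apply: le_trans (geo_le N M0); apply: ler_sum => n _.
  by have := dterm_bound x0 s0 a h uM n; rewrite ler_norml => /andP[].
Qed.

Lemma dv_decomp x0 s0 a u (M : R) : 0 <= M -> (forall x a s, `|u x a s| <= M) ->
  disc_value pi zeta beta x0 s0 a u [::] =
  u x0 (a [::]) s0 + beta * \sum_(s' : S) pi s0 s' *
     disc_value pi zeta beta (zeta x0 (a [::]) s0) s' (contp a s') u [::].
Proof.
move=> M0 uM.
set x1 := zeta x0 (a [::]) s0.
have key : forall N, series (dterm x0 s0 a u [::]) N.+1 =
   u x0 (a [::]) s0 + beta * \sum_(s' : S) pi s0 s' *
       series (dterm x1 s' (contp a s') u [::]) N.
  move=> N; rewrite /series /= big_nat_recl //; congr (_ + _).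
    by rewrite /dterm /= expr0 mul1r.
  symmetry; rewrite big_distrr /=.
  under eq_bigr do rewrite mulrA big_distrr /=.
  rewrite exchange_big /=; symmetry; apply: eq_bigr => n _.
  rewrite /dterm /= big_distrr /=; apply: eq_bigr => s' _.
  rewrite exprS -!mulrA; congr (_ * _); rewrite mulrCA; congr (_ * _).
  congr (_ * _); rewrite -[[:: s']]/([::] ++ [:: s']) cexp_cat.
  by apply: cexp_ext => h'; rewrite /contp state_cat head_cat.
rewrite dvE; apply: cvg_lim => //.
rewrite -cvg_shiftS.
under eq_cvg do rewrite /= key.
apply: cvgD; first exact: cvg_cst.
apply: cvgMl_tmp.
apply: cvg_seqsum => s'.
apply: cvgMl_tmp.
rewrite dvE; exact: (dterm_cvg M0 uM).
Qed.

End Markov2.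
Section SupInf.
Variables (R : realType) (T : Type).

Lemma sup_img_ub (P : set T) (f : T -> R) (B : R) :
  (forall t, P t -> f t <= B) -> forall t, P t -> f t <= sup (f @` P).
Proof.
move=> fB t Pt; apply: (ub_le_sup); last by exists t.
by exists B => _ [u Pu <-]; apply: fB.
Qed.

Lemma sup_img_least (P : set T) (f : T -> R) (b : R) :
  P !=set0 -> (forall t, P t -> f t <= b) -> sup (f @` P) <= b.
Proof.
move=> [t0 Pt0] fb; apply: ge_sup; first by exists (f t0), t0.
by move=> _ [u Pu <-]; apply: fb.
Qed.

Lemma esup_img (P : set T) (f : T -> R) (B : R) :
  P !=set0 -> (forall t, P t -> f t <= B) ->
  ereal_sup [set (f t)%:E | t in P] = (sup (f @` P))%:E.
Proof.
move=> [t0 Pt0] fB; rewrite -ereal_sup_EFin.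
- by rewrite image_comp.
- by exists B => _ [u Pu <-]; apply: fB.
- by exists (f t0), t0.
Qed.

Lemma inf_img_lb (P : set T) (f : T -> R) (B : R) :
  (forall t, P t -> B <= f t) -> forall t, P t -> inf (f @` P) <= f t.
Proof.
move=> fB t Pt; apply: (ge_inf); last by exists t.
by exists B => _ [u Pu <-]; apply: fB.
Qed.

Lemma inf_img_greatest (P : set T) (f : T -> R) (b : R) :
  P !=set0 -> (forall t, P t -> b <= f t) -> b <= inf (f @` P).
Proof.
move=> [t0 Pt0] fb; apply: lb_le_inf; first by exists (f t0), t0.
by move=> _ [u Pu <-]; apply: fb.
Qed.

Lemma einf_img (P : set T) (f : T -> R) (B : R) :
  P !=set0 -> (forall t, P t -> B <= f t) ->
  ereal_inf [set (f t)%:E | t in P] = (inf (f @` P))%:E.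
Proof.
move=> [t0 Pt0] fB; rewrite -ereal_inf_EFin.
- by rewrite image_comp.
- by exists B => _ [u Pu <-]; apply: fB.
- by exists (f t0), t0.
Qed.

End SupInf.
Lemma supnorm_ge (R : realType) (S A X : Type) (f : X -> A -> S -> R) :
  (exists M : R, forall x a s, `|f x a s| <= M) ->
  forall x a s, `|f x a s| <= supnorm f.
Proof.
move=> [M hM] x a s; apply: ub_le_sup; last by exists (x, a, s).
by exists M => _ [t _ <-]; apply: hM.
Qed.

Lemma le_sum_single (R : realType) (I : nat) (f : 'I_I -> R) j :
  (forall i, 0 <= f i) -> f j <= \sum_(i < I) f i.
Proof.
by move=> f0; rewrite (bigD1 j) //= lerDl; apply: sumr_ge0 => i _.
Qed.
Lemma geo_sum (R : realType) (z M : R) N : 0 <= z -> z < 1 -> 0 <= M ->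
  \sum_(0 <= n < N) M * z ^+ n <= M / (1 - z).
Proof.
move=> z0 z1 M0; have b1 : z != 1 by rewrite lt_eqF.
have := geometric_seriesE M b1.
move=> /(congr1 (fun f => f N)) /= => e.
rewrite (_ : \sum_(0 <= n < N) M * z ^+ n = series (geometric M z) N) //.
rewrite e /=; apply: ler_wpM2r; first by rewrite invr_ge0 subr_ge0 ltW.
by rewrite ler_piMr // gerBl exprn_ge0.
Qed.

Lemma half_pow (R : realType) k :
  (k.+1%:R : R) * (2^-1) ^+ k <= 4 * (3 / 4) ^+ k.
Proof.
elim: k => [|k IH]; first by rewrite !expr0 mulr1 mul1r ler1n.
case: k IH => [|k] IH.
  rewrite !expr1; lra.
have a0 : 0 <= (2^-1 : R) ^+ k.+1 by rewrite exprn_ge0 // invr_ge0.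
have b0 : 0 <= (3 / 4 : R) ^+ k.+1 by rewrite exprn_ge0 // divr_ge0.
move: IH a0 b0; rewrite (exprS (2^-1 : R) k.+1) (exprS (3/4 : R) k.+1).
set a := (2^-1 : R) ^+ k.+1; set b := (3 / 4 : R) ^+ k.+1.
have e3 : (k.+3%:R : R) = k%:R + 3 by rewrite -addn3 natrD.
have e2 : (k.+2%:R : R) = k%:R + 2 by rewrite -addn2 natrD.
rewrite e3 e2 => IH a0 b0.
have k0 : (0 : R) <= k%:R by rewrite ler0n.
have := mulr_ge0 a0 k0; nra.
Qed.

Lemma sum1_le0 (R : realType) (v : nat -> R) N : (forall k, 0 <= v k) ->
  \sum_(1 <= k < N) v k <= \sum_(0 <= k < N) v k.
Proof.
move=> v0; case: N => [|N]; first by rewrite !big_geq.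
by rewrite [X in _ <= X](@big_cat_nat _ _ _ 1) //= big_nat1 lerDr.
Qed.

Lemma ub_series (R : realType) (u : nat -> R) N0 (B : R) : (forall k, 0 <= u k) ->
  (forall N, \sum_(N0 <= k < N) u k <= B) ->
  (\sum_(N0 <= k <oo) (u k)%:E <= B%:E)%E.
Proof.
move=> u0 uB; apply: lime_le.
  by apply: is_cvg_nneseries => n _ _; rewrite lee_fin.
by apply: nearW => N; rewrite sumEFin lee_fin.
Qed.
Section Main.
Variables (R : realType) (S A : finType) (X : countType) (I : nat)
 (pi : S -> S -> R) (zeta : X -> A -> S -> X) (p r : X -> A -> S -> R)
 (g : 'I_I -> X -> A -> S -> R) (gbar : 'I_I -> R) (beta : R)
 (F : ('I_I -> R) -> X -> S -> R).
Hypothesis pi_pos : forall s s', 0 < pi s s'.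
Hypothesis pi_sum1 : forall s, \sum_(s' : S) pi s s' = 1.
Hypothesis hr : exists M : R, forall x a s, `|r x a s| <= M.
Hypothesis hg : forall i, exists M : R, forall x a s, `|g i x a s| <= M.
Hypothesis beta_gt0 : 0 < beta.
Hypothesis beta_lt1 : beta < 1.
Hypothesis hfeas : forall x0 s0, exists a, feasible pi zeta p g gbar beta x0 s0 a.
Hypothesis hF : inN pi zeta p r g gbar beta F.

Let pi_ge0 s s' : 0 <= pi s s'. Proof. exact: ltW. Qed.
Let beta_ge0 : 0 <= beta. Proof. exact: ltW. Qed.

Definition Phi (gam lam : 'I_I -> R) x s a : R :=
  r x a s + \sum_(i < I) (gam i * g i x a s + lam i * (g i x a s - gbar i))
  + beta * \sum_(s' : S) pi s s' * F (fun i => gam i + lam i) (zeta x a s) s'.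
Definition Pa x s : set A := [set a | 0 <= p x a s].
Definition Gr gam lam x s := sup (Phi gam lam x s @` Pa x s).
Definition NN : set ('I_I -> R) := [set lam | nonneg lam].
Definition Bv gam x s := inf ((fun lam => Gr gam lam x s) @` NN).

Lemma Pa_ne x s : Pa x s !=set0.
Proof. by case: (hfeas x s) => a [hp _]; exists (a [::]); exact: (hp [::]). Qed.

Lemma Phi_ub gam lam x s a : Phi gam lam x s a <= \sum_(a' : A) `|Phi gam lam x s a'|.
Proof.
apply: le_trans (ler_norm _) _; rewrite (bigD1 a) //= lerDl.
by apply: sumr_ge0 => *; exact: normr_ge0.
Qed.

Lemma Gr_ge gam lam x s a : Pa x s a -> Phi gam lam x s a <= Gr gam lam x s.
Proof. by apply: sup_img_ub => t _; exact: Phi_ub. Qed.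

Lemma Gr_le gam lam x s b :
  (forall a, Pa x s a -> Phi gam lam x s a <= b) -> Gr gam lam x s <= b.
Proof. exact/sup_img_least/Pa_ne. Qed.

Lemma Gr_E gam lam x s :
  ereal_sup [set (Phi gam lam x s a)%:E | a in Pa x s] = (Gr gam lam x s)%:E.
Proof. by apply: esup_img (Pa_ne x s) _ => t _; exact: Phi_ub. Qed.

Lemma nonneg0 : nonneg (fun _ : 'I_I => 0 : R).
Proof. by move=> i. Qed.

Lemma nonnegD (u v : 'I_I -> R) : nonneg u -> nonneg v -> nonneg (fun i => u i + v i).
Proof. by move=> hu hv i; rewrite addr_ge0. Qed.

Lemma LB gam lam x s al : nonneg gam -> nonneg lam ->
  feasible pi zeta p g gbar beta x s al ->
  disc_value pi zeta beta x s al r [::]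
   + \sum_(i < I) gam i * disc_value pi zeta beta x s al (g i) [::]
  <= Phi gam lam x s (al [::]).
Proof.
move=> hgam hlam hal.
have [Mr hMr] := hr.
have Mr0 : 0 <= Mr by apply: le_trans (hMr x (al [::]) s).
set x1 := zeta x (al [::]) s.
set V0 := fun s' => disc_value pi zeta beta x1 s' (contp al s') r [::].
set Vi := fun i s' => disc_value pi zeta beta x1 s' (contp al s') (g i) [::].
have dv0 : disc_value pi zeta beta x s al r [::] =
    r x (al [::]) s + beta * \sum_(s' : S) pi s s' * V0 s'.
  exact: (dv_decomp zeta pi_ge0 pi_sum1 beta_ge0 beta_lt1 x s al Mr0 hMr).
have dvi : forall i, disc_value pi zeta beta x s al (g i) [::] =
    g i x (al [::]) s + beta * \sum_(s' : S) pi s s' * Vi i s'.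
  move=> i; have [Mi hMi] := hg i.
  have Mi0 : 0 <= Mi by apply: le_trans (hMi x (al [::]) s).
  exact: (dv_decomp zeta pi_ge0 pi_sum1 beta_ge0 beta_lt1 x s al Mi0 hMi).
have hFs : forall s', V0 s' + \sum_(i < I) (gam i + lam i) * Vi i s'
    <= F (fun i => gam i + lam i) x1 s'.
  move=> s'; have [_ _ h3 _] := hF.2 x1 s'.
  apply: h3; first exact: feasible_cont.
  exact: nonnegD.
have feas0 : forall i, gbar i <= g i x (al [::]) s + beta * \sum_(s' : S) pi s s' * Vi i s'.
  by move=> i; rewrite -dvi; exact: hal.2.
have T1 : \sum_(s' : S) pi s s' * (V0 s' + \sum_(i < I) (gam i + lam i) * Vi i s')
   <= \sum_(s' : S) pi s s' * F (fun i => gam i + lam i) x1 s'.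
  by apply: ler_sum => s' _; apply: ler_wpM2l.
have T2 : \sum_(s' : S) pi s s' * (V0 s' + \sum_(i < I) (gam i + lam i) * Vi i s')
   = \sum_(s' : S) pi s s' * V0 s' +
     \sum_(i < I) (gam i + lam i) * \sum_(s' : S) pi s s' * Vi i s'.
  under eq_bigr do rewrite mulrDr; rewrite big_split /=; congr (_ + _).
  under eq_bigr do rewrite big_distrr /=.
  rewrite exchange_big /=; apply: eq_bigr => i _; rewrite big_distrr /=.
  by apply: eq_bigr => s' _; rewrite mulrCA.
rewrite dv0 (eq_bigr _ (fun i _ => congr1 (fun v => gam i * v) (dvi i))).
rewrite /Phi -/x1.
have hs : \sum_(i < I) gam i * (g i x (al [::]) s + beta * \sum_(s' : S) pi s s' * Vi i s')
  <= \sum_(i < I) (gam i * g i x (al [::]) s + lam i * (g i x (al [::]) s - gbar i))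
     + \sum_(i < I) beta * ((gam i + lam i) * \sum_(s' : S) pi s s' * Vi i s').
  rewrite -big_split /=; apply: ler_sum => i _.
  have := feas0 i; have := hlam i; have := hgam i; nra.
rewrite -big_distrr /= in hs.
have b0 := beta_ge0.
move: T1 T2 hs b0; set PT := \sum_(s' : S) pi s s' * (V0 s' + _).
set PF := \sum_(s' : S) pi s s' * F _ x1 s'.
set SQ := \sum_(i < I) (gam i + lam i) * _.
set G := \sum_(i < I) gam i * _.
set H := \sum_(i < I) (_ + _).
move=> T1 T2 hs b0; nra.
Qed.

Lemma Bv_le gam lam x s : nonneg gam -> nonneg lam -> Bv gam x s <= Gr gam lam x s.
Proof.
move=> hgam hlam; case: (hfeas x s) => al hal.
apply: (inf_img_lb (B := disc_value pi zeta beta x s al r [::]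
   + \sum_(i < I) gam i * disc_value pi zeta beta x s al (g i) [::])); last exact: hlam.
move=> l hl; apply: le_trans (LB hgam hl hal) _.
by apply: Gr_ge; exact: (hal.1 [::]).
Qed.

Lemma Bv_ge gam x s b :
  (forall lam, nonneg lam -> b <= Gr gam lam x s) -> b <= Bv gam x s.
Proof. by move=> h; apply: inf_img_greatest => //; exists (fun _ => 0); exact: nonneg0. Qed.

Lemma Bop_eq gam x s : nonneg gam ->
  Bop pi zeta p r g gbar beta F gam x s = (Bv gam x s)%:E.
Proof.
move=> hgam; rewrite /Bop.
transitivity (ereal_inf [set (Gr gam lam x s)%:E | lam in NN]).
  by congr ereal_inf; apply: eq_imagel => lam _; exact: Gr_E.
case: (hfeas x s) => al hal.
apply: (einf_img (B := disc_value pi zeta beta x s al r [::]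
   + \sum_(i < I) gam i * disc_value pi zeta beta x s al (g i) [::])).
  by exists (fun _ => 0); exact: nonneg0.
move=> l hl; apply: le_trans (LB hgam hl hal) _.
by apply: Gr_ge; exact: (hal.1 [::]).
Qed.


Let nr := supnorm r.
Let ng i := supnorm (g i).
Let L := Lconst r g beta.
Let SN := \sum_(i < I) ng i.

Lemma r_le x a s : `|r x a s| <= nr.
Proof. exact: supnorm_ge. Qed.
Lemma g_le i x a s : `|g i x a s| <= ng i.
Proof. exact: supnorm_ge. Qed.

Lemma norms_ge0 (x : X) (s : S) : 0 <= nr /\ (forall i, 0 <= ng i).
Proof.
have [a _] := Pa_ne x s; split.
  exact: le_trans (r_le x a s).
by move=> i; exact: le_trans (g_le i x a s).
Qed.

Lemma L_eq : (1 - beta) * L = nr + SN.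
Proof.
rewrite /L /Lconst mulrC -mulrA mulVf ?mulr1 //.
by rewrite subr_eq0 eq_sym lt_eqF.
Qed.

Lemma wsum_le (x : X) (s : S) (c : 'I_I -> R) : nonneg c ->
  \sum_(i < I) c i * ng i <= (\sum_(i < I) c i) * SN.
Proof.
move=> hc; have [_ hng] := norms_ge0 x s.
rewrite mulr_suml; apply: ler_sum => i _; apply: ler_wpM2l => //.
exact: le_sum_single.
Qed.

Lemma Bv_ub gam x s : nonneg gam ->
  Bv gam x s <= (1 + \sum_(i < I) gam i) * L.
Proof.
move=> hgam; apply: le_trans (Bv_le x s hgam nonneg0) _.
apply: Gr_le => a _; rewrite /Phi.
have -> : (fun i => gam i + 0) = gam by apply/funext => i; rewrite addr0.
have hF1 : \sum_(s' : S) pi s s' * F gam (zeta x a s) s' <= (1 + \sum_(i < I) gam i) * L.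
  rewrite -[X in _ <= X]mul1r -{1}(pi_sum1 s) mulr_suml.
  apply: ler_sum => s' _; apply: ler_wpM2l => //.
  have [_ _ _ h4] := hF.2 (zeta x a s) s'; exact: h4 hgam.
have hs : \sum_(i < I) (gam i * g i x a s + 0 * (g i x a s - gbar i))
     <= \sum_(i < I) gam i * ng i.
  apply: ler_sum => i _; rewrite mul0r addr0; apply: ler_wpM2l => //.
  exact: le_trans (ler_norm _) (g_le i x a s).
have hw := wsum_le x s hgam.
have hr0 : r x a s <= nr by exact: le_trans (ler_norm _) (r_le x a s).
have [nr0 hng] := norms_ge0 x s.
have SN0 : 0 <= SN by apply: sumr_ge0 => i _.
have SG0 : 0 <= \sum_(i < I) gam i by apply: sumr_ge0 => i _.
have hL := L_eq.
have b0 := beta_ge0.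
move: hF1 hs hw hr0 hL SG0 SN0 nr0 b0.
set PF := \sum_(s' : S) _.
set SG := \sum_(i < I) gam i.
set H := \sum_(i < I) (_ + _).
set W := \sum_(i < I) gam i * ng i.
move=> hF1 hs hw hr0 hL SG0 SN0 nr0 b0.
nra.
Qed.

Lemma Bv_lb gam x s al : nonneg gam -> feasible pi zeta p g gbar beta x s al ->
  disc_value pi zeta beta x s al r [::]
   + \sum_(i < I) gam i * disc_value pi zeta beta x s al (g i) [::]
  <= Bv gam x s.
Proof.
move=> hgam hal; apply: Bv_ge => lam hl; apply: le_trans (LB hgam hl hal) _.
by apply: Gr_ge; exact: (hal.1 [::]).
Qed.

Lemma Phi_lip g1 g2 lam x s a : nonneg g1 -> nonneg g2 -> nonneg lam ->
  Phi g1 lam x s a <= Phi g2 lam x s a + L * \sum_(i < I) `|g1 i - g2 i|.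
Proof.
move=> h1 h2 hl; set D := \sum_(i < I) `|g1 i - g2 i|.
have hF2 : forall s', F (fun i => g1 i + lam i) (zeta x a s) s'
     <= F (fun i => g2 i + lam i) (zeta x a s) s' + L * D.
  move=> s'; have [_ hlip _ _] := hF.2 (zeta x a s) s'.
  have := hlip _ _ (nonnegD h1 hl) (nonnegD h2 hl).
  have -> : \sum_(i < I) `|g1 i + lam i - (g2 i + lam i)| = D.
    by apply: eq_bigr => i _; congr `|_|; ring.
  by rewrite ler_norml => /andP[_]; rewrite lerBlDl addrC.
have hPF : \sum_(s' : S) pi s s' * F (fun i => g1 i + lam i) (zeta x a s) s'
   <= \sum_(s' : S) pi s s' * F (fun i => g2 i + lam i) (zeta x a s) s' + L * D.
  rewrite -[X in _ <= _ + X]mul1r -{1}(pi_sum1 s) mulr_suml -big_split /=.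
  by apply: ler_sum => s' _; rewrite -mulrDr; apply: ler_wpM2l.
have [nr0 hng] := norms_ge0 x s.
have SN0 : 0 <= SN by apply: sumr_ge0 => i _.
have hs : \sum_(i < I) (g1 i * g i x a s + lam i * (g i x a s - gbar i))
   <= \sum_(i < I) (g2 i * g i x a s + lam i * (g i x a s - gbar i)) + D * (nr + SN).
  rewrite /D mulr_suml -big_split /=; apply: ler_sum => i _.
  have hgi : `|g i x a s| <= nr + SN.
    apply: le_trans (g_le i x a s) _; apply: le_trans (le_sum_single i hng) _.
    by rewrite lerDr.
  have : (g1 i - g2 i) * g i x a s <= `|g1 i - g2 i| * (nr + SN).
    apply: le_trans (ler_norm _) _; rewrite normrM; apply: ler_wpM2l => //.
  nra.
have hL := L_eq.
have b0 := beta_ge0.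
have D0 : 0 <= D by apply: sumr_ge0 => i _.
rewrite /Phi.
move: hPF hs hL b0 D0; set PF1 := \sum_(s' : S) pi s s' * F _ _ s'.
set PF2 := \sum_(s' : S) pi s s' * F (fun i => g2 i + lam i) _ s'.
set H1 := \sum_(i < I) (g1 i * _ + _).
set H2 := \sum_(i < I) (g2 i * _ + _).
move=> hPF hs hL b0 D0; nra.
Qed.

Lemma Bv_lip1 g1 g2 x s : nonneg g1 -> nonneg g2 ->
  Bv g1 x s <= Bv g2 x s + L * \sum_(i < I) `|g1 i - g2 i|.
Proof.
move=> h1 h2; rewrite -lerBlDr; apply: Bv_ge => lam hl; rewrite lerBlDr.
apply: le_trans (Bv_le x s h1 hl) _.
apply: Gr_le => a Pa.

apply: le_trans (Phi_lip x s a h1 h2 hl) _.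
by rewrite lerD2r; apply: Gr_ge.
Qed.

Lemma Bv_lip g1 g2 x s : nonneg g1 -> nonneg g2 ->
  `|Bv g1 x s - Bv g2 x s| <= L * \sum_(i < I) `|g1 i - g2 i|.
Proof.
move=> h1 h2; rewrite ler_norml; apply/andP; split.
  have := Bv_lip1 x s h2 h1.
  have -> : \sum_(i < I) `|g2 i - g1 i| = \sum_(i < I) `|g1 i - g2 i|.
    by apply: eq_bigr => i _; rewrite distrC.
  lra.
have := Bv_lip1 x s h1 h2; lra.
Qed.

Lemma Bv_approx gam x s e : nonneg gam -> 0 < e ->
  exists2 lam, nonneg lam & Gr gam lam x s <= Bv gam x s + e.
Proof.
move=> hgam e0.
case: (pselect (exists2 lam, nonneg lam & Gr gam lam x s <= Bv gam x s + e)) => // H.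
have : Bv gam x s + e <= Bv gam x s.
  apply: Bv_ge => lam hl; rewrite leNgt; apply/negP => hlt; apply: H.
  by exists lam => //; exact: ltW.
lra.
Qed.

Lemma Phi_cvx g1 g2 l1 l2 t x s a :
  nonneg g1 -> nonneg g2 -> nonneg l1 -> nonneg l2 -> 0 <= t -> t <= 1 ->
  Phi (fun i => t * g1 i + (1 - t) * g2 i) (fun i => t * l1 i + (1 - t) * l2 i) x s a
  <= t * Phi g1 l1 x s a + (1 - t) * Phi g2 l2 x s a.
Proof.
move=> h1 h2 hl1 hl2 t0 t1; rewrite /Phi.
have -> : (fun i => (t * g1 i + (1 - t) * g2 i) + (t * l1 i + (1 - t) * l2 i))
    = (fun i => t * (g1 i + l1 i) + (1 - t) * (g2 i + l2 i)).
  by apply/funext => i; ring.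
have hF1 : forall s', F (fun i => t * (g1 i + l1 i) + (1 - t) * (g2 i + l2 i)) (zeta x a s) s'
   <= t * F (fun i => g1 i + l1 i) (zeta x a s) s' + (1 - t) * F (fun i => g2 i + l2 i) (zeta x a s) s'.
  move=> s'; have [hc _ _ _] := hF.2 (zeta x a s) s'.
  exact: hc (nonnegD h1 hl1) (nonnegD h2 hl2) t0 t1.
have hPF : \sum_(s' : S) pi s s' * F (fun i => t * (g1 i + l1 i) + (1 - t) * (g2 i + l2 i)) (zeta x a s) s'
   <= t * \sum_(s' : S) pi s s' * F (fun i => g1 i + l1 i) (zeta x a s) s'
      + (1 - t) * \sum_(s' : S) pi s s' * F (fun i => g2 i + l2 i) (zeta x a s) s'.
  rewrite !mulr_sumr -big_split /=; apply: ler_sum => s' _.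
  apply: le_trans (ler_wpM2l (pi_ge0 s s') (hF1 s')) _.
  rewrite mulrDr !mulrA [pi s s' * t]mulrC [pi s s' * (1 - t)]mulrC.
  exact: lexx.
have hH : \sum_(i < I) ((t * g1 i + (1 - t) * g2 i) * g i x a s
      + (t * l1 i + (1 - t) * l2 i) * (g i x a s - gbar i))
   = t * \sum_(i < I) (g1 i * g i x a s + l1 i * (g i x a s - gbar i))
     + (1 - t) * \sum_(i < I) (g2 i * g i x a s + l2 i * (g i x a s - gbar i)).
  by rewrite !mulr_sumr -big_split /=; apply: eq_bigr => i _; ring.
rewrite hH; have b0 := beta_ge0.
move: hPF b0.
set P := \sum_(s' : S) _.
set P1 := \sum_(s' : S) pi s s' * F (fun i => g1 i + l1 i) _ s'.
set P2 := \sum_(s' : S) pi s s' * F (fun i => g2 i + l2 i) _ s'.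
move=> hPF b0; nra.
Qed.

Lemma Bv_cvx g1 g2 t x s :
  nonneg g1 -> nonneg g2 -> 0 <= t -> t <= 1 ->
  Bv (fun i => t * g1 i + (1 - t) * g2 i) x s
  <= t * Bv g1 x s + (1 - t) * Bv g2 x s.
Proof.
move=> h1 h2 t0 t1; apply/ler_addgt0Pr => e e0.
have [l1 hl1 he1] := Bv_approx x s h1 e0.
have [l2 hl2 he2] := Bv_approx x s h2 e0.
have hl : nonneg (fun i => t * l1 i + (1 - t) * l2 i).
  by move=> i; rewrite addr_ge0 // mulr_ge0 // subr_ge0.
have hgg : nonneg (fun i => t * g1 i + (1 - t) * g2 i).
  by move=> i; rewrite addr_ge0 // mulr_ge0 // subr_ge0.
apply: le_trans (Bv_le x s hgg hl) _.
have : Gr (fun i => t * g1 i + (1 - t) * g2 i) (fun i => t * l1 i + (1 - t) * l2 i) x s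
   <= t * Gr g1 l1 x s + (1 - t) * Gr g2 l2 x s.
  apply: Gr_le => a Pa; apply: le_trans (Phi_cvx x s a h1 h2 hl1 hl2 t0 t1) _.
  apply: lerD; apply: ler_wpM2l; rewrite ?subr_ge0 //; exact: Gr_ge.
move: he1 he2; nra.
Qed.

Lemma Bv_abs gam x s : nonneg gam ->
  `|Bv gam x s| <= (1 + \sum_(i < I) gam i) * `|L|.
Proof.
move=> hgam; have [al hal] := hfeas x s.
have hlb := Bv_lb hgam hal.
have hub := Bv_ub x s hgam.
have [nr0 hng] := norms_ge0 x s.
set K := (1 - beta)^-1.
have K0 : 0 <= K by rewrite invr_ge0 subr_ge0 ltW.
have hv0 := dv_bound zeta pi_ge0 pi_sum1 beta_ge0 beta_lt1 x s al [::] nr0 (@r_le).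
have hvi : forall i, `|disc_value pi zeta beta x s al (g i) [::]| <= ng i * K.
  by move=> i; exact: (dv_bound zeta pi_ge0 pi_sum1 beta_ge0 beta_lt1 x s al [::] (hng i) (@g_le i)).
have hsum : - ((\sum_(i < I) gam i * ng i) * K)
    <= \sum_(i < I) gam i * disc_value pi zeta beta x s al (g i) [::].
  rewrite mulr_suml -sumrN; apply: ler_sum => i _.
  have := hvi i; rewrite ler_norml => /andP[h _].
  have := hgam i; nra.
have hw := wsum_le x s hgam.
have SN0 : 0 <= SN by apply: sumr_ge0 => i _.
have SG0 : 0 <= \sum_(i < I) gam i by apply: sumr_ge0 => i _.
have LE : L = (nr + SN) * K by [].
have L0 : 0 <= L by rewrite LE mulr_ge0 // addr_ge0.
rewrite (ger0_norm L0) ler_norml; apply/andP; split; last exact: hub.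
move: hv0; rewrite ler_norml => /andP[hv0 _].
move: hlb hsum hw hv0 LE.
set v0 := disc_value _ _ _ _ _ _ r _.
set Vg := \sum_(i < I) gam i * disc_value _ _ _ _ _ _ _ _.
set W := \sum_(i < I) gam i * ng i.
set SG := \sum_(i < I) gam i.
move=> hlb hsum hw hv0 LE.
have h2 : K * W <= K * (SG * SN) by apply: ler_wpM2l.
have h3 : 0 <= K * SN by apply: mulr_ge0.
have h4 : 0 <= K * (SG * nr) by rewrite !mulr_ge0.
rewrite -/K in hv0.
rewrite LE.
nra.
Qed.

Lemma sum_ball (gam : 'I_I -> R) k : ballB k gam -> \sum_(i < I) gam i <= I%:R * k%:R.
Proof.
move=> [_ hk]; apply: (@le_trans _ _ (\sum_(i < I) (k%:R : R))).
  by apply: ler_sum => i _.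
by rewrite sumr_const card_ord mulr_natl.
Qed.

Let C : R := 16 * (1 + I%:R) * `|L|.

Lemma C_ge0 : 0 <= C.
Proof. by rewrite /C !mulr_ge0 // addr_ge0. Qed.

Lemma kseries_le N :
  \sum_(1 <= k < N) (2^-1) ^+ k * ((1 + I%:R * k%:R) * `|L|) <= C.
Proof.
have t0 : forall k, 0 <= (2^-1 : R) ^+ k * ((1 + I%:R * k%:R) * `|L|).
  by move=> k; rewrite !mulr_ge0 // ?exprn_ge0 // ?invr_ge0 // addr_ge0.
apply: le_trans (sum1_le0 _ t0) _.
apply: (@le_trans _ _ (\sum_(0 <= k < N) (4 * (1 + I%:R) * `|L|) * (3 / 4) ^+ k)).
  apply: ler_sum => k _.
  have hk := half_pow R k.
  have e : (1 + I%:R * k%:R : R) <= (1 + I%:R) * k.+1%:R.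
    rewrite -natr1; have := ler0n R k; have := ler0n R I; nra.
  have a0 : 0 <= (2^-1 : R) ^+ k by rewrite exprn_ge0 // invr_ge0.
  have L0 : 0 <= `|L| := normr_ge0 L.
  have I0 : (0 : R) <= 1 + I%:R by rewrite addr_ge0.
  apply: (@le_trans _ _ ((2^-1) ^+ k * ((1 + I%:R) * k.+1%:R * `|L|))).
    by apply: ler_wpM2l => //; apply: ler_wpM2r.
  move: hk; set q := (3 / 4 : R) ^+ k; set a := (2^-1 : R) ^+ k.
  set K := (k.+1%:R : R) => hk.
  have := mulr_ge0 I0 L0.
  nra.
apply: le_trans (geo_sum _ _ _ _) _.
- by rewrite divr_ge0.
- lra.
- by rewrite !mulr_ge0 // addr_ge0.
- rewrite /C (_ : 1 - 3 / 4 = (4 : R)^-1); last lra.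
  by rewrite invrK le_eqVlt; apply/orP; left; apply/eqP; ring.
Qed.

Lemma inM_Bv : inM (fun gam x s => fine (Bop pi zeta p r g gbar beta F gam x s)).
Proof.
rewrite /inM /normM /=.
have E1 : forall x s k, (ereal_sup [set (`|fine (Bop pi zeta p r g gbar beta F gam x s)|)%:E
      | gam in @ballB R I k] <= ((1 + I%:R * k%:R) * `|L|)%:E)%E.
  move=> x s k; apply: ge_ereal_sup => _ [gam hb <-].
  rewrite Bop_eq /=; last by case: hb.
  rewrite lee_fin; apply: le_trans (Bv_abs x s (proj1 hb)) _.
  by apply: ler_wpM2r => //; rewrite lerD2l; exact: sum_ball.
have E1' : forall x s k, (0 <= ereal_sup [set (`|fine (Bop pi zeta p r g gbar beta F gam x s)|)%:E
      | gam in @ballB R I k])%E.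
  move=> x s k.
  have hm : [set (`|fine (Bop pi zeta p r g gbar beta F gam x s)|)%:E
      | gam in @ballB R I k] (`|fine (Bop pi zeta p r g gbar beta F (fun _ => 0) x s)|)%:E.
    exists (fun _ => 0) => //; split; [exact: nonneg0 | move=> i; exact: ler0n].
  apply: le_trans (ereal_sup_ubound hm); by rewrite lee_fin.
have h2ge0 : forall n, (0 : R) <= (2^-1) ^+ n by move=> n; rewrite exprn_ge0 // invr_ge0.
have E2 : forall x s, (\big[+%E/0%R]_(1 <= k <oo) ((2^-1 ^+ k)%:E *
        ereal_sup [set (`|fine (Bop pi zeta p r g gbar beta F gam x s)|)%:E
          | gam in @ballB R I k]) <= C%:E)%E.
  move=> x s.
  apply: le_trans (@lee_nneseries _ _ (fun k => ((2^-1 ^+ k * ((1 + I%:R * k%:R) * `|L|))%:E)) _ _ _ _) _.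
  - move=> i _ _; apply: mule_ge0; [by rewrite lee_fin | exact: E1'].
  - move=> n _; rewrite EFinM; apply: lee_wpmul2l; [by rewrite lee_fin | exact: E1].
  - apply: ub_series => [k|N]; last exact: kseries_le.
    by rewrite !mulr_ge0 // addr_ge0.
have E3 : forall s, (\esum_(x in [set: X]) ((2^-1 ^+ (pickle x).+1)%:E *
       \big[+%E/0%R]_(1 <= k <oo) ((2^-1 ^+ k)%:E *
        ereal_sup [set (`|fine (Bop pi zeta p r g gbar beta F gam x s)|)%:E
          | gam in @ballB R I k])) <= C%:E)%E.
  move=> s.
  apply: le_trans (@le_esum _ _ _ _ (fun x => ((2^-1 ^+ (pickle x).+1 * C)%:E)) _) _.
    move=> x _; rewrite EFinM; apply: lee_wpmul2l; [by rewrite lee_fin | exact: E2].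
  have inj : set_inj [set: X] pickle by move=> a b _ _; exact: (pcan_inj pickleK).
  have := esum_image [set: X] pickle (fun j => ((2^-1 ^+ j.+1 * C)%:E)) inj.
  move=> /= <-.
  apply: (@le_trans _ _ (\esum_(j in [set: nat]) ((2^-1 ^+ j.+1 * C)%:E))).
    rewrite [X in (X <= _)%E]esum_mkcond [X in (_ <= X)%E]esum_mkcond.
    apply: le_esum => j _; rewrite in_setT; case: ifP => // _.
    by rewrite lee_fin mulr_ge0 // C_ge0.
  rewrite -nneseries_esumT; last by move=> n; rewrite lee_fin mulr_ge0 // C_ge0.
  apply: ub_series => [n|N]; first by rewrite mulr_ge0 // C_ge0.
  apply: (@le_trans _ _ (\sum_(0 <= j < N) (2^-1 * C) * (2^-1) ^+ j)).
    by apply: ler_sum => j _; rewrite exprS le_eqVlt; apply/orP; left; apply/eqP; ring.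
  apply: le_trans (geo_sum _ _ _ _) _.
  - by rewrite invr_ge0.
  - lra.
  - by rewrite mulr_ge0 // ?C_ge0 // invr_ge0.
  - rewrite (_ : 1 - 2^-1 = (2 : R)^-1); last lra.
    by rewrite [X in X / _]mulrC mulrK // unitfE invr_eq0 pnatr_eq0.
apply: le_lt_trans (@lee_sum _ _ _ (fun s => ((2^-1 ^+ (enum_rank s).+1 * C)%:E)) _ _ _) _.
  by move=> s _; rewrite EFinM; apply: lee_wpmul2l; [rewrite lee_fin | exact: E3].
by rewrite sumEFin ltry.
Qed.

End Main.

Theorem lemma3p5 (R : realType) (S A : finType) (X : countType) (I : nat)
    (pi : S -> S -> R) (zeta : X -> A -> S -> X) (p r : X -> A -> S -> R)
    (g : 'I_I -> X -> A -> S -> R) (gbar : 'I_I -> R) (beta : R) :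
  (forall s s' : S, 0 < pi s s') ->
  (forall s : S, \sum_(s' : S) pi s s' = 1) ->
  (exists M : R, forall x a s, `|r x a s| <= M) ->
  (forall i, exists M : R, forall x a s, `|g i x a s| <= M) ->
  0 < beta -> beta < 1 ->
  (forall (x0 : X) (s0 : S), exists a : seq S -> A,
      feasible pi zeta p g gbar beta x0 s0 a) ->
  forall F : ('I_I -> R) -> X -> S -> R,
  inN pi zeta p r g gbar beta F ->
  (forall (gam : 'I_I -> R) (x : X) (s : S), nonneg gam ->
      Bop pi zeta p r g gbar beta F gam x s \is a fin_num) /\
  inN pi zeta p r g gbar beta
    (fun gam x s => fine (Bop pi zeta p r g gbar beta F gam x s)).
Proof.
move=> hpi hsum hr hg hb0 hb1 hfeas F hF.
have BE := Bop_eq hpi hsum hr hg hb0 hb1 hfeas hF.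
split.
  by move=> gam x s hgam; rewrite BE.
split; first by apply: inM_Bv.
move=> x s; split.
- move=> g1 g2 t h1 h2 t0 t1.
  have h12 : nonneg (fun i => t * g1 i + (1 - t) * g2 i).
    by move=> i; rewrite addr_ge0 // mulr_ge0 // subr_ge0.
  rewrite !BE //=; by apply: Bv_cvx.
- move=> g1 g2 h1 h2; rewrite !BE //=.
  by apply: Bv_lip.
- move=> a gam ha hgam; rewrite BE //=.
  by apply: Bv_lb.
- move=> gam hgam; rewrite BE //=.
  by apply: Bv_ub.
Qed.
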